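(* Let $D$ be an $n\times n$ distance matrix and let $q_0$ be the smallest $q\in\mathbb N$ such that $D^{(q)}=D$. Then there exists a graph realisation $(G=(V,E),\Phi)$ of $D$ with $$|V|\le n+\sum_{\substack{1\le i<j\le n\\ 2\le D_{ij}\le q_0}}(D_{ij}-1).$$
   Context: $[n]=\{1,\dots,n\}$. An $n\times n$ matrix $D$ with non-negative integer entries is a distance matrix if (i) $D_{ii}=0$ for all $i$ and $D_{ij}>0$ for all $i\ne j$; (ii) $D$ is symmetric; (iii) $D_{iw}+D_{wj}\ge D_{ij}$ for all $i,j,w\in[n]$. For $q\in\mathbb N$, the $q$-skeleton $G^q$ of $D$ is the edge-weighted graph with vertex set $[n]$ having an edge $\{i,j\}$ ($i<j$) if and only if $D_{ij}\le q$, this edge having weight (length) $D_{ij}$. $D^{(q)}$ denotes the $n\times n$ matrix whose $(i,j)$ entry is the weighted shortest-path distance between $i$ and $j$ in $G^q$ (equal to $\infty$ if no path exists). A graph realisation of $D$ is a pair $(G,\Phi)$, where $G=(V,E)$ is a finite simple undirected unweighted graph and $\Phi:[n]\to V$ is an injective map such that $d_G(\Phi(i),\Phi(j))=D_{ij}$ for all $i,j\in[n]$; here $d_G$ denotes the shortest-path distance in $G$ (equal to $\infty$ if no path exists). *)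

(* Defs.v *)
From mathcomp Require Import all_boot all_algebra.
Set Implicit Arguments. Unset Strict Implicit. Unset Printing Implicit Defensive.

Definition distance_matrix (n : nat) (D : 'M[nat]_n) : Prop :=
  [/\ (forall i, D i i = 0%N),
      (forall i j, i != j -> 0 < D i j),
      (forall i j, D i j = D j i) &
      (forall i j w, D i j <= D i w + D w j)].

Definition skel_edge (n : nat) (D : 'M[nat]_n) (q : nat) : rel 'I_n :=
  fun a b => (a != b) && (D a b <= q).

Definition walk_weight (n : nat) (D : 'M[nat]_n) (i : 'I_n) (p : seq 'I_n) : nat :=
  sumn (pairmap (fun a b => D a b) i p).

Definition skel_walk (n : nat) (D : 'M[nat]_n) (q : nat) (i j : 'I_n)
  (p : seq 'I_n) : Prop :=
  path (skel_edge D q) i p /\ last i p = j.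

(* "D^(q)_{ij} = d" for a finite value d: d is the weighted shortest-path
   distance from i to j in G^q (a walk of weight d exists, none is shorter). *)
Definition skel_dist_is (n : nat) (D : 'M[nat]_n) (q : nat) (i j : 'I_n)
  (d : nat) : Prop :=
  (exists p, skel_walk D q i j p /\ walk_weight D i p = d) /\
  (forall p, skel_walk D q i j p -> d <= walk_weight D i p).

(* D^(q) = D (entrywise; D has finite entries so infinite entries are excluded) *)
Definition skel_eq (n : nat) (D : 'M[nat]_n) (q : nat) : Prop :=
  forall i j, skel_dist_is D q i j (D i j).

Definition gdist_is (V : finType) (e : rel V) (x y : V) (k : nat) : Prop :=
  (exists p, [/\ path e x p, last x p = y & size p = k]) /\
  (forall p, path e x p -> last x p = y -> k <= size p).

Definition graph_realisation (n : nat) (D : 'M[nat]_n) (V : finType)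
  (e : rel V) (Phi : 'I_n -> V) : Prop :=
  [/\ symmetric e, irreflexive e, injective Phi &
      forall i j, gdist_is e (Phi i) (Phi j) (D i j)].

(* Main.v *)
Require Import Defs.
From mathcomp Require Import all_boot all_algebra zify.
Set Implicit Arguments. Unset Strict Implicit.

Definition cond n (D : 'M[nat]_n) (q0 : nat) (ij : 'I_n * 'I_n) : bool :=
  (ij.1 < ij.2) && (2 <= D ij.1 ij.2 <= q0).
Definition cnt n (D : 'M[nat]_n) q0 ij : nat := if cond D q0 ij then D ij.1 ij.2 - 1 else 0.
Definition Ity n (D : 'M[nat]_n) q0 := {ij : 'I_n * 'I_n & 'I_(cnt D q0 ij)}.
Definition VT n (D : 'M[nat]_n) q0 : finType := ('I_n + Ity D q0)%type.

Definition pi1 n (D : 'M[nat]_n) q0 (s : Ity D q0) : 'I_n := (tag s).1.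
Definition pi2 n (D : 'M[nat]_n) q0 (s : Ity D q0) : 'I_n := (tag s).2.
Definition kk n (D : 'M[nat]_n) q0 (s : Ity D q0) : nat := (tagged s : nat).+1.

Definition adj_end n (D : 'M[nat]_n) q0 (a : 'I_n) (s : Ity D q0) : bool :=
  ((a == pi1 s) && (kk s == 1)) || ((a == pi2 s) && ((kk s).+1 == D (pi1 s) (pi2 s))).

Definition ge n (D : 'M[nat]_n) q0 (u v : VT D q0) : bool :=
  match u, v with
  | inl a, inl b => (a != b) && (D a b == 1)
  | inl a, inr s => adj_end a s
  | inr s, inl a => adj_end a s
  | inr s, inr t => (pi1 s == pi1 t) && (pi2 s == pi2 t) &&
                    (((kk s).+1 == kk t) || ((kk t).+1 == kk s))
  end.

Definition hh n (D : 'M[nat]_n) q0 (a : 'I_n) (v : VT D q0) : nat :=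
  match v with
  | inl b => D a b
  | inr s => minn (D a (pi1 s) + kk s) (D a (pi2 s) + (D (pi1 s) (pi2 s) - kk s))
  end.

Lemma kk_bnd n (D : 'M[nat]_n) q0 (s : Ity D q0) :
  cond D q0 (tag s) /\ kk s < D (pi1 s) (pi2 s).
Proof.
have : (tagged s : nat) < cnt D q0 (tag s) := ltn_ord _.
rewrite /kk /pi1 /pi2; move: (nat_of_ord (tagged s)) => x; move: (tag s) => ij; rewrite /cnt.
case: ifP => // C H; split => //; move: C; rewrite /cond => /andP[_ /andP[C _]]. lia.
Qed.

Lemma ge_sym n (D : 'M[nat]_n) q0 : distance_matrix D -> symmetric (@ge n D q0).
Proof.
case=> _ _ Ds _ [a|s] [b|t] //=.
- by rewrite eq_sym Ds.
- by rewrite (eq_sym (pi1 s)) (eq_sym (pi2 s)) orbC.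
Qed.

Lemma ge_irr n (D : 'M[nat]_n) q0 : irreflexive (@ge n D q0).
Proof.
case=> [a|s] /=; first by rewrite eqxx.
rewrite !eqxx orbb /=; apply/negbTE/eqP; lia.
Qed.

Lemma hh_lip n (D : 'M[nat]_n) q0 a (u v : VT D q0) :
  distance_matrix D -> ge u v -> hh a v <= (hh a u).+1.
Proof.
case=> D0 Dp Ds Dt.
case: u => [b|s]; case: v => [c|t] /=.
- move=> /andP[_ /eqP H]; have := Dt a c b; lia.
- have [_ Ht] := kk_bnd t.
  case/orP => /andP[/eqP -> /eqP K]; lia.
- have [_ Hs] := kk_bnd s.
  case/orP => /andP[/eqP -> /eqP K].
  + have := Dt a (pi1 s) (pi2 s); rewrite (Ds (pi2 s)); lia.
  + have := Dt a (pi2 s) (pi1 s); lia.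
- have [_ Hs] := kk_bnd s; have [_ Ht] := kk_bnd t.
  case/andP => /andP[/eqP E1 /eqP E2]; rewrite -E1 -E2 => K.
  rewrite -E1 -E2 in Ht.
  case/orP: K => /eqP K; lia.
Qed.

Lemma hh_path n (D : 'M[nat]_n) q0 a (p : seq (VT D q0)) x :
  distance_matrix D -> path (@ge n D q0) x p -> hh a (last x p) <= hh a x + size p.
Proof.
move=> DM; elim: p x => [|y p IH] x /=; first by rewrite addn0.
case/andP => E P; have H2 := IH _ P; have H1 := hh_lip a DM E.
rewrite addnS -addSn; apply: leq_trans H2 _; by rewrite leq_add2r.
Qed.

Definition reach (T : Type) (e : rel T) x y m :=
  exists p, [/\ path e x p, last x p = y & size p = m].

Lemma reach0 (T : Type) (e : rel T) x : reach e x x 0.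
Proof. by exists [::]. Qed.

Lemma reach1 (T : Type) (e : rel T) x y : e x y -> reach e x y 1.
Proof. by move=> H; exists [:: y]; rewrite /= H. Qed.

Lemma reach_trans (T : Type) (e : rel T) x y z m m' :
  reach e x y m -> reach e y z m' -> reach e x z (m + m').
Proof.
move=> [p [P1 L1 S1]] [p' [P2 L2 S2]]; exists (p ++ p').
by rewrite cat_path last_cat L1 P1 P2 L2 size_cat S1 S2.
Qed.

Lemma reach_sym (T : Type) (e : rel T) x y m :
  symmetric e -> reach e x y m -> reach e y x m.
Proof.
move=> Se [p [P L S]]; elim: p x m P L S => [|z p IH] x m /=.
  by move=> _ <- <-; exact: reach0.
case/andP => E P L S.
have := IH z _ P L erefl => R.
rewrite -S -addn1; apply: reach_trans R _; apply: reach1; by rewrite Se.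
Qed.

Definition pos n (D : 'M[nat]_n) q0 (i j : 'I_n) (k : nat) : VT D q0 :=
  if k == 0 then inl i else if k == D i j then inl j else
  match (insub k.-1 : option 'I_(cnt D q0 (i, j))) with
  | Some o => inr (Tagged (fun ij => 'I_(cnt D q0 ij)) o)
  | None => inl i end.

Lemma pos_mid n (D : 'M[nat]_n) q0 i j k :
  cond D q0 (i, j) -> 0 < k < D i j ->
  exists s, [/\ pos D q0 i j k = inr s, pi1 s = i, pi2 s = j & kk s = k].
Proof.
move=> C Hk; rewrite /pos.
have -> : (k == 0) = false by apply/eqP; lia.
have -> : (k == D i j) = false by apply/eqP; lia.
case: insubP => [o _ Ho | H].
  eexists; split; [reflexivity | by [] | by [] |].
  by rewrite /kk /= Ho; lia.
exfalso; move: H; rewrite /cnt C /=; lia.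
Qed.

Lemma pos_step n (D : 'M[nat]_n) q0 i j k :
  cond D q0 (i, j) -> k < D i j -> ge (pos D q0 i j k) (pos D q0 i j k.+1).
Proof.
move=> C Hk; have C' := C; move: C' => /andP[_ /andP [D2 _]]; simpl in D2.
case: k Hk => [|k] Hk.
  have [s [-> P1 P2 K]] := pos_mid (k := 1) C ltac:(lia).
  by rewrite /pos eqxx /= /adj_end P1 K !eqxx.
have [s [-> P1 P2 K]] := pos_mid (k := k.+1) C ltac:(lia).
case: (ltnP k.+2 (D i j)) => H.
  have [t [-> Q1 Q2 K']] := pos_mid (k := k.+2) C ltac:(lia).
  by rewrite /= P1 P2 Q1 Q2 K K' !eqxx.
have -> : pos D q0 i j k.+2 = inl j.
  rewrite /pos; have -> : (k.+2 == D i j) by apply/eqP; lia.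
  done.
by rewrite /= /adj_end P1 P2 K eqxx /= orbC; apply/orP; left; apply/eqP; lia.
Qed.

Lemma pos_reach n (D : 'M[nat]_n) q0 i j :
  cond D q0 (i, j) -> forall m k, k + m <= D i j ->
  reach (@ge n D q0) (pos D q0 i j k) (pos D q0 i j (k + m)) m.
Proof.
move=> C; elim=> [|m IH] k Hk; first by rewrite addn0; apply: reach0.
have -> : k + m.+1 = k.+1 + m by lia.
have -> : m.+1 = 1 + m by [].
apply: (reach_trans (y := pos D q0 i j k.+1)); first by apply: reach1; apply: pos_step; lia.
apply: IH; lia.
Qed.

Lemma gadget n (D : 'M[nat]_n) q0 i j :
  cond D q0 (i, j) -> reach (@ge n D q0) (inl i) (inl j) (D i j).
Proof.
move=> C; have := pos_reach C (k := 0) (m := D i j) ltac:(lia).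
have C' := C; move: C' => /andP[_ /andP [D2 _]]; simpl in D2.
rewrite add0n /pos eqxx; have -> : (D i j == 0) = false by apply/eqP; lia.
by rewrite eqxx.
Qed.

Lemma skel_reach n (D : 'M[nat]_n) q0 u v :
  distance_matrix D -> skel_edge D q0 u v -> reach (@ge n D q0) (inl u) (inl v) (D u v).
Proof.
move=> DM; have [D0 Dp Ds Dt] := DM; case/andP => Nuv Hq.
have := Dp _ _ Nuv => Hp.
case: (ltnP 1 (D u v)) => H1; last first.
  have E : D u v = 1 by lia.
  by rewrite E; apply: reach1; rewrite /= Nuv E.
case: (ltngtP u v) => Huv.
- by apply: gadget; rewrite /cond /= Huv; lia.
- rewrite Ds; apply: reach_sym; first exact: ge_sym.
  apply: gadget; rewrite /cond /= Huv Ds; lia.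
- by move: Nuv; rewrite (val_inj Huv) eqxx.
Qed.

Lemma walk_reach n (D : 'M[nat]_n) q0 (p : seq 'I_n) i :
  distance_matrix D -> path (skel_edge D q0) i p ->
  reach (@ge n D q0) (inl i) (inl (last i p)) (walk_weight D i p).
Proof.
move=> DM; elim: p i => [|a p IH] i /=; first by move=> _; apply: reach0.
case/andP => E P; apply: reach_trans; first exact: skel_reach E.
exact: IH.
Qed.

Lemma card_VT n (D : 'M[nat]_n) q0 :
  #|VT D q0| = n + \sum_(i < n) \sum_(j < n | (i < j) && (2 <= D i j <= q0)) (D i j - 1).
Proof.
rewrite /VT card_sum card_ord; congr (_ + _).
rewrite /Ity card_tagged sumnE big_map big_enum /=.
rewrite -(pair_big xpredT xpredT (fun i j => #|'I_(cnt D q0 (i, j))|)) /=.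
apply: eq_bigr => i _. rewrite [RHS]big_mkcond /=; apply: eq_bigr => j _.
by rewrite card_ord /cnt /cond.
Qed.

Theorem mainTheorem8 (n : nat) (D : 'M[nat]_n) (q0 : nat) :
  distance_matrix D ->
  skel_eq D q0 ->
  (forall q, skel_eq D q -> q0 <= q) ->
  exists (V : finType) (e : rel V) (Phi : 'I_n -> V),
    graph_realisation D e Phi /\
    #|V| <= n + \sum_(i < n) \sum_(j < n | (i < j) && (2 <= D i j <= q0))
                  (D i j - 1).
Proof.
move=> DM SE _.
exists (VT D q0), (@ge n D q0), inl; split; last by rewrite card_VT.
split; [exact: ge_sym | exact: ge_irr | by move=> a b [] |].
move=> i j; split.
  have [[p [[Pp Lp] Wp]] _] := SE i j.
  have [p' [P1 L1 S1]] := walk_reach DM Pp.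
  by exists p'; rewrite P1 L1 S1 Lp Wp.
move=> p P L.
have := hh_path i DM P; rewrite L /=.
by have [D0 _ _ _] := DM; rewrite D0.
Qed.
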